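(* For $r\ge0$ let $\rho_D(r)$ be the unique positive solution $\rho$ of $\frac{(\rho-1)^3}{(2\rho-1)^2}=r^2$, and let $\rho(r)$ be the unique positive solution $\rho$ of $\frac{1}{\rho^2}\left(2e^{\rho-1}-1\right)=r^2+1$. Then $1+4r^2\le\rho_D(r)\le 2+4r^2$ for all $r\ge0$, and $\rho(r)=1+(1+o(1))\ln(1+r^2)$ as $r\to\infty$. *)

(* Defs.v *)
From Stdlib Require Import Reals.
From Coquelicot Require Import Coquelicot.
Open Scope R_scope.

(* rho is a positive solution of (rho-1)^3/(2 rho-1)^2 = r^2.
   The side condition 2 rho - 1 <> 0 makes the division genuine
   (Stdlib's x/0 is 0, which would otherwise create the spurious
   "solution" rho = 1/2 at r = 0). *)
Definition is_rhoD_sol (r rho : R) : Prop :=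
  0 < rho /\ 2 * rho - 1 <> 0 /\
  (rho - 1) ^ 3 / (2 * rho - 1) ^ 2 = r ^ 2.

Definition is_rho_sol (r rho : R) : Prop :=
  0 < rho /\ / rho ^ 2 * (2 * exp (rho - 1) - 1) = r ^ 2 + 1.

(* Main.v *)
Require Import Defs.
From Stdlib Require Import Reals Lra Psatz.
From Coquelicot Require Import Coquelicot.
Open Scope R_scope.

Lemma ln_lt_id y : 0 < y -> ln y <= y - 1.
Proof. intros H. pose proof (exp_ineq1_le (ln y)). rewrite exp_ln in H0; lra. Qed.

Lemma e45 : 2 < exp (4/5).
Proof.
  replace (4/5) with (1/5+1/5+1/5+1/5) by field. rewrite !exp_plus.
  pose proof (exp_ineq1 (1/5)). assert (6/5 < exp (1/5)) by lra.
  set (a := exp (1/5)) in *.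
  assert (36/25 < a * a) by nra. nra.
Qed.

Lemma rho_facts rho u : 1 <= u -> 0 < rho -> 2 * exp (rho - 1) = rho ^ 2 * u + 1 ->
  1/5 < rho /\ ln u - ln 50 <= rho - 1 /\ rho - 1 <= ln 13 + 2 * ln rho + ln u.
Proof.
  intros Hu Hr He.
  assert (H1 : 1/5 < rho).
  { destruct (Rlt_or_le (1/5) rho) as [h|h]; auto. exfalso.
    assert (exp (rho - 1) <= exp (-(4/5))).
    { destruct (Req_dec rho (1/5)) as [->|n]. right; f_equal; lra.
      left; apply exp_increasing; lra. }
    rewrite exp_Ropp in H. pose proof e45.
    assert (/ exp (4/5) < / 2) by (apply Rinv_lt_contravar; lra).
    nra. }
  assert (Hp : 0 < rho ^ 2 * u) by (apply Rmult_lt_0_compat; nra).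
  assert (Hr2 : 1/25 < rho ^ 2) by nra.
  assert (Hr3 : u / 25 <= rho ^ 2 * u) by nra.
  split; [exact H1|split].
  - assert (u / 50 <= exp (rho - 1)) by lra.
    apply ln_le in H; [|lra]. rewrite ln_exp, ln_div in H; lra.
  - assert (exp (rho - 1) <= 13 * (rho ^ 2 * u)) by nra.
    apply ln_le in H; [|apply exp_pos]. rewrite ln_exp, !ln_mult in H; try lra; try nra.
    rewrite ln_pow in H; [|lra]. simpl INR in H. lra.
Qed.

Lemma ln_sqrt_bound x : 0 < x -> 2 * ln x <= 4 * sqrt x - 4.
Proof.
  intros H. assert (0 < sqrt x) by (apply sqrt_lt_R0; lra).
  rewrite <- (sqrt_sqrt x) at 1 by lra. rewrite ln_mult by lra.
  pose proof (ln_lt_id (sqrt x) H0). lra.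
Qed.
Lemma partD r rho : 0 <= r -> 0 < rho -> 2 * rho - 1 <> 0 ->
  (rho - 1) ^ 3 / (2 * rho - 1) ^ 2 = r ^ 2 -> 1 + 4 * r ^ 2 <= rho <= 2 + 4 * r ^ 2.
Proof.
  intros Hr Hp Hn He.
  assert (Hq : 0 < (2 * rho - 1) ^ 2) by (apply pow2_gt_0; auto).
  assert (E : (rho - 1) ^ 3 = r ^ 2 * (2 * rho - 1) ^ 2).
  { rewrite <- He. field. auto. }
  set (s := r ^ 2) in *. assert (Hs : 0 <= s) by (unfold s; nra).
  set (t := rho - 1) in *. replace (2 * rho - 1) with (2 * t + 1) in E by (unfold t; ring).
  assert (Ht : 0 <= t).
  { destruct (Rle_or_lt 0 t); auto. exfalso. assert (0 < t * t) by nra. assert (t ^ 3 < 0) by (simpl; nra).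
    assert (0 <= s * (2 * t + 1) ^ 2) by (apply Rmult_le_pos; [lra| apply pow2_ge_0]). lra. }
  split.
  - destruct (Rle_or_lt (4 * s) t) as [h|h]; [unfold t in h; lra|exfalso].
    destruct (Req_dec t 0) as [z|z].
    + rewrite z in E. nra.
    + assert (0 < t) by lra. nra.
  - destruct (Rle_or_lt t (1 + 4 * s)) as [h|h]; [unfold t in h; lra|exfalso].
    nra.
Qed.
Lemma key_bound rho L : 0 < rho -> 1 <= L ->
  L - ln 50 <= rho - 1 -> rho - 1 <= ln 13 + 2 * ln rho + L ->
  10 + 2 * ln 13 <= L ->
  Rabs ((rho - 1) / L - 1) <= (ln 50 + ln 13 + 8) / sqrt L.
Proof.
  intros Hp HL Hlo Hhi HA.
  assert (l50 : 0 < ln 50) by (rewrite <- ln_1; apply ln_increasing; lra).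
  assert (l13 : 0 < ln 13) by (rewrite <- ln_1; apply ln_increasing; lra).
  pose proof (ln_sqrt_bound rho Hp) as Hs.
  assert (Hsq : 0 <= sqrt rho) by apply sqrt_pos.
  assert (4 * sqrt rho <= rho / 2 + 8) by (pose proof (sqrt_sqrt rho (Rlt_le _ _ Hp)); pose proof (pow2_ge_0 (sqrt rho - 4)); simpl in *; nra).
  assert (Hrb : rho <= 10 + 2 * ln 13 + 2 * L) by lra.
  set (q := sqrt L).
  assert (Hq : q * q = L) by (apply sqrt_sqrt; lra).
  assert (Hq1 : 1 <= q) by (unfold q; rewrite <- sqrt_1; apply sqrt_le_1_alt; lra).
  assert (sqrt rho <= 2 * q).
  { apply Rsqr_incr_0_var. unfold Rsqr. rewrite sqrt_sqrt by lra. nra. lra. }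
  assert (- (ln 50) * q <= rho - 1 - L <= (ln 13 + 8) * q) by nra.
  replace ((rho - 1) / L - 1) with ((rho - 1 - L) / (q * q)) by (rewrite Hq; field; lra).
  rewrite Rabs_div by nra.
  rewrite (Rabs_pos_eq (q*q)) by nra.
  assert (Ha : Rabs (rho - 1 - L) <= (ln 50 + ln 13 + 8) * q) by (apply Rabs_le; nra).
  replace ((ln 50 + ln 13 + 8) / q) with (((ln 50 + ln 13 + 8) * q) / (q * q)) by (field; lra).
  unfold Rdiv. apply Rmult_le_compat_r; [|exact Ha].
  left. apply Rinv_0_lt_compat. nra.
Qed.
Theorem lemma1 (rhoD rho : R -> R)
  (HrhoD : forall r, 0 <= r -> is_rhoD_sol r (rhoD r))
  (Hrho : forall r, 0 <= r -> is_rho_sol r (rho r)) :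
  (forall r, 0 <= r -> 1 + 4 * r ^ 2 <= rhoD r <= 2 + 4 * r ^ 2) /\
  is_lim (fun r => (rho r - 1) / ln (1 + r ^ 2)) p_infty (Finite 1).
Proof.
  split.
  { intros r Hr. destruct (HrhoD r Hr) as [a [b c]]. eapply partD; eauto. }
  apply is_lim_spec. intros eps. simpl.
  assert (l50 : 0 < ln 50) by (rewrite <- ln_1; apply ln_increasing; lra).
  assert (l13 : 0 < ln 13) by (rewrite <- ln_1; apply ln_increasing; lra).
  set (B := ln 50 + ln 13 + 8).
  assert (HB : 0 < B) by (unfold B; lra).
  pose proof (cond_pos eps) as He.
  set (K := (B / eps) ^ 2 + 11 + 2 * ln 13).
  exists (sqrt (exp K)). intros r Hr.
  assert (HM : 0 <= sqrt (exp K)) by apply sqrt_pos.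
  assert (Hr0 : 0 <= r) by lra.
  assert (Hr2 : exp K < r ^ 2).
  { rewrite <- (sqrt_sqrt (exp K)) by (left; apply exp_pos). simpl. nra. }
  assert (HL : K < ln (1 + r ^ 2)).
  { rewrite <- (ln_exp K). apply ln_increasing. apply exp_pos. lra. }
  destruct (Hrho r Hr0) as [Hp Heq].
  assert (E : 2 * exp (rho r - 1) = rho r ^ 2 * (1 + r ^ 2) + 1).
  { assert (0 < rho r ^ 2) by (apply pow_lt; auto).
    apply (f_equal (fun z => rho r ^ 2 * z)) in Heq.
    rewrite <- Rmult_assoc, Rinv_r in Heq by lra. lra. }
  assert (Hu : 1 <= 1 + r ^ 2) by nra.
  destruct (rho_facts (rho r) (1 + r ^ 2) Hu Hp E) as [_ [Hlo Hhi]].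
  assert (HK1 : 0 <= (B / eps) ^ 2) by apply pow2_ge_0.
  assert (Hk : Rabs ((rho r - 1) / ln (1 + r ^ 2) - 1) <= B / sqrt (ln (1 + r ^ 2))).
  { apply key_bound; auto; unfold K in HL; lra. }
  eapply Rle_lt_trans; [exact Hk|].
  assert (Hs : B / eps < sqrt (ln (1 + r ^ 2))).
  { rewrite <- (sqrt_pow2 (B / eps)) by (left; apply Rdiv_lt_0_compat; lra).
    apply sqrt_lt_1_alt. split; [apply pow2_ge_0|]. unfold K in HL; lra. }
  assert (0 < B / eps) by (apply Rdiv_lt_0_compat; lra).
  apply (Rmult_lt_reg_r (sqrt (ln (1 + r ^ 2)))). lra.
  unfold Rdiv at 1. rewrite Rmult_assoc, Rinv_l by lra.
  apply (Rmult_lt_compat_l eps) in Hs; [|lra].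
  replace (eps * (B / eps)) with B in Hs by (field; lra). lra.
Qed.
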